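(* There exist constants $r,C>1$ such that for every $q\ge 2$ there exist $n\in\mathbb{N}$, $p\in(0,1)$ and a function $f\colon(\{0,1\}^n,\mu_p)\to\mathbb{R}$ such that (a) $\|f_{S\to x}\|_2\le r^{|S|}\|f\|_2$ for all $S\subseteq[n]$ and all $x\in\{0,1\}^S$, and (b) $\|T_\rho f\|_q>\|f\|_2$ for all $\rho>\frac{C\log q}{rq}$ (with $\rho\le 1$).
   Context: $\mu_p$ is the $p$-biased product measure on $\{0,1\}^n$, $\mu_p(x)=p^{|\{i:x_i=1\}|}(1-p)^{|\{i:x_i=0\}|}$; all norms are with respect to $\mu_p$. $f_{S\to x}(y)=f(x,y)$ is the restriction. The noise operator $T_\rho f(x)=\mathbb{E}_y[f(y)]$, where $y$ keeps each coordinate of $x$ independently with probability $\rho$ and otherwise resamples it from the $p$-biased distribution on $\{0,1\}$. $\log$ is the natural logarithm. *)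

(* Defs.v *)
From mathcomp Require Import all_boot all_order all_algebra.
From mathcomp Require Import reals exp Rstruct.
From Stdlib Require Import Rdefinitions.
Set Implicit Arguments. Unset Strict Implicit. Unset Printing Implicit Defensive.
Import Order.TTheory GRing.Theory Num.Theory.
Local Open Scope ring_scope.

Definition cube (n : nat) := {ffun 'I_n -> bool}.

Definition bw (p : R) (b : bool) : R := if b then p else 1 - p.

Definition mu (n : nat) (p : R) (x : cube n) : R := \prod_(i < n) bw p (x i).

Definition lqnorm (n : nat) (p q : R) (f : cube n -> R) : R :=
  powR (\sum_(x : cube n) mu p x * powR `|f x| q) (q^-1).

(* L^2 norm of the restriction f_{S -> x} : a function of the coordinates
   y in {0,1}^{[n] \ S}, under the p-biased measure on [n] \ S.  The points
   y of {0,1}^{[n]\S} are identified with the z in {0,1}^n that agree with x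
   on S; only the values of x on S matter. *)
Definition restr_l2norm (n : nat) (p : R) (S : {set 'I_n}) (x : cube n)
  (f : cube n -> R) : R :=
  powR (\sum_(z : cube n | [forall i in S, z i == x i])
          (\prod_(i < n | i \notin S) bw p (z i)) * powR `|f z| 2) (2^-1).

(* Noise operator: T_rho f (x) = E_y f(y), y_i = x_i with prob. rho, otherwise
   resampled from the p-biased distribution; transition kernel is the product
   of rho*[x_i = y_i] + (1-rho)*bw p y_i. *)
Definition noise (n : nat) (p rho : R) (f : cube n -> R) (x : cube n) : R :=
  \sum_(y : cube n)
     (\prod_(i < n) (rho * (x i == y i)%:R + (1 - rho) * bw p (y i))) * f y.

(* Main.v *)
Require Import Defs.
From mathcomp Require Import all_boot all_order all_algebra.
From mathcomp Require Import reals exp Rstruct.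
From Stdlib Require Import Rdefinitions.
From mathcomp Require Import lra sequences.
Import Order.TTheory GRing.Theory Num.Theory.
Local Open Scope ring_scope.

Lemma sum_cube1 (F : cube 1 -> R) :
  \sum_(x : cube 1) F x = F [ffun=> true] + F [ffun=> false].
Proof.
rewrite (reindex (fun b : bool => [ffun=> b] : cube 1)) /=; last first.
  exists (fun x : cube 1 => x ord0) => [b _|x _]; first by rewrite ffunE.
  by apply/ffunP => i; rewrite ffunE (ord1 i).
by rewrite big_bool.
Qed.

Lemma forall1 (S : {set 'I_1}) (z x : cube 1) :
  [forall i in S, z i == x i] = (ord0 \in S) ==> (z ord0 == x ord0).
Proof.
apply/forall_inP/implyP => [H /H //| H i]; rewrite (ord1 i) => /H //.
Qed.

Lemma prod1 (S : {set 'I_1}) (F : 'I_1 -> R) :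
  \prod_(i < 1 | i \notin S) F i = if ord0 \in S then 1 else F ord0.
Proof. rewrite big_mkcond big_ord1 /=. by case: (ord0 \in S). Qed.

Lemma mu1 (p : R) (b : bool) : mu p ([ffun=> b] : cube 1) = bw p b.
Proof. by rewrite /mu big_ord1 ffunE. Qed.

Lemma ln_lb (K : realType) (y : K) : 0 < y -> 1 - y^-1 <= ln y.
Proof.
move=> y0; have := @le_ln1Dx K (y^-1 - 1).
have -> : 1 + (y^-1 - 1) = y^-1 by lra.
rewrite lnV ?posrE // => H.
have : -1 < y^-1 - 1 by have := invr_gt0 y; rewrite y0; lra.
move=> /H; lra.
Qed.

Lemma expR34 (K : realType) : expR (3/4 : K) <= 4.
Proof.
have := @expR_ge1Dx K (- (3/4)); rewrite expRN => H.
have h0 := @expR_gt0 K (3/4).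
rewrite -(@ler_pV2 K) ?posrE //; last by rewrite inE /= unitfE h0 andbT gt_eqF.
- by apply: le_trans _ H; lra.
- by rewrite inE /= unitfE; apply/andP; split; lra.
Qed.

Lemma powR2 (K : realType) : powR (2:K) 2 = 4.
Proof. rewrite (@powR_mulrn K 2 2); [rewrite expr2; lra|lra]. Qed.

Lemma powR4 (K : realType) : powR (4:K) (2^-1) = 2.
Proof.
by rewrite -(powR2 K) -powRrM mulfV ?powRr1 // pnatr_eq0.
Qed.

Lemma ge1_half (K : realType) (a : K) : 1 <= a -> 1 <= powR a (2^-1).
Proof.
move=> a1; apply: le_trans (ler_powR a1 (_ : 0 <= 2^-1)); first by rewrite powRr0.
by rewrite invr_ge0; lra.
Qed.

Lemma q4 (K : realType) (q : K) : 2 <= q -> 16 <= q ^+ 4.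
Proof.
move=> q2; have h : 4 <= q * q by nra.
rewrite (_ : q ^+ 4 = (q * q) * (q * q)); first nra.
by rewrite !exprS expr0 mulr1 !mulrA.
Qed.

Lemma ln1p_lb (K : realType) (rho : K) : 0 < rho -> rho <= 1 -> rho / 2 <= ln (1 + rho).
Proof.
move=> r0 r1; have h := @ln_lb K (1 + rho).
have h1 : (1 + rho)^-1 <= 1 - rho / 2.
  rewrite -[_^-1]mul1r ler_pdivrMr; nra.
apply: le_trans (h _); lra.
Qed.

Lemma q5 (K : realType) (q : K) : 0 < q -> expR (5 * ln q) = q ^+ 5.
Proof.
move=> q0.
by rewrite expRM_natl lnK.
Qed.

Lemma iz2 : @eq R (IZR 2%Z) 2. Proof. reflexivity. Qed.

Theorem mainTheorem2 :
  exists r C : R, 1 < r /\ 1 < C /\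
  forall q : R, 2 <= q ->
  exists (n : nat) (p : R) (f : cube n -> R),
    0 < p < 1 /\
    (forall (S : {set 'I_n}) (x : cube n),
        restr_l2norm p S x f <= r ^+ #|S| * lqnorm p 2 f) /\
    (forall rho : R, C * ln q / (r * q) < rho -> rho <= 1 ->
        lqnorm p q (noise p rho f) > lqnorm p 2 f).
Proof.
exists 2, 20; split; first lra; split; first lra.
move=> q q2.
have q0 : 0 < q by lra.
set p := q^-1.
have p0 : 0 < p by rewrite invr_gt0.
have p1 : p < 1 by rewrite invf_lt1 //; lra.
exists 1%N, p, (fun x : cube 1 => if x ord0 then 2 else 1).
rewrite /lqnorm iz2.
have h1 : powR `|1| 2 = 1 :> R by rewrite normr1 powR1.
have h2 : powR `|2| 2 = 4 :> R by rewrite ger0_norm; [exact: powR2 | lra].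
have hB : \sum_(x : cube 1) mu p x * powR `|if x ord0 then 2 else 1| 2
          = 1 + 3 * p.
  by rewrite sum_cube1 !mu1 !ffunE /= /bw h1 h2; lra.
split; first by rewrite p0 p1.
split.
  move=> S x; rewrite /restr_l2norm hB big_mkcond sum_cube1 /=.
  rewrite !forall1 !prod1 !ffunE /=.
  case hS: (ord0 \in S) => /=.
    have cS : #|S| = 1%N.
      apply/eqP; rewrite eqn_leq; apply/andP; split.
        by have := max_card (mem S); rewrite card_ord.
      by apply/card_gt0P; exists ord0.
    rewrite cS expr1.
    set s := (X in powR X _).
    have hs : s <= 4 + 0 * p.
      by rewrite /s; case: (x ord0) => /=; rewrite ?h1 ?h2; lra.
    have hs0 : 0 <= s.
      by rewrite /s; case: (x ord0) => /=; rewrite ?h1 ?h2; lra.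
    apply: le_trans (ge0_ler_powR _ _ _ hs) _.
    - by rewrite invr_ge0; lra.
    - by rewrite nnegrE.
    - by rewrite nnegrE; lra.
    rewrite mul0r addr0 powR4; have : 1 <= powR (1 + 3 * p) 2^-1 by apply: ge1_half; lra.
    lra.
  have -> : S = set0 by apply/setP => i; rewrite (ord1 i) hS in_set0.
  rewrite cards0 expr0 mul1r /bw h1 h2.
  by rewrite (_ : p * 4 + (1 - p) * 1 = 1 + 3 * p) //; lra.
move=> rho hr hr1.
have lq : 0 < ln q by apply: ln_gt0; lra.
have pq : p * q = 1 by rewrite /p mulVf // gt_eqF.
have hpos : 0 < 20 * ln q / (2 * q) by apply: divr_gt0; nra.
have rho0 : 0 < rho by lra.
have hq : 10 * ln q < q * rho.
  by move: hr; rewrite ltr_pdivrMr; nra.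
have hT : noise p rho (fun x : cube 1 => if x ord0 then 2 else 1) [ffun=> true]
          = 1 + rho + (1 - rho) * p.
  rewrite /noise sum_cube1 !big_ord1 !ffunE /= /bw.
  lra.
rewrite hB sum_cube1 !mu1 /bw /= hT.
set Y := (1 - p) * _.
have Y0 : 0 <= Y by apply: mulr_ge0; [lra | exact: powR_ge0].
have up : powR (1 + 3 * p) (q / 2) <= 16.
  rewrite /powR gt_eqF; last lra.
  have hl : ln (1 + 3 * p) <= 3 * p by apply: le_ln1Dx; lra.
  have e1 : expR (q / 2 * ln (1 + 3 * p)) <= expR (3/4 + 3/4).
    rewrite ler_expR; nra.
  rewrite exp.expRD in e1.
  have := expR34 R; have := @expR_gt0 R (3/4); nra.
have lo : 16 < p * powR `|1 + rho + (1 - rho) * p| q.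
  have l1 : powR (1 + rho) q <= powR `|1 + rho + (1 - rho) * p| q.
    rewrite ger0_norm; last nra.
    apply: ge0_ler_powR; rewrite ?nnegrE; nra.
  have l2 : q ^+ 5 < powR (1 + rho) q.
    rewrite -q5 // /powR gt_eqF; last lra.
    rewrite ltr_expR; have := @ln1p_lb R rho rho0 hr1; nra.
  have l3 : p * q ^+ 5 = q ^+ 4 by rewrite exprS mulrA pq mul1r.
  have := @q4 R q q2; have : p * q ^+ 5 < p * powR `|1 + rho + (1 - rho) * p| q.
    by rewrite ltr_pM2l //; lra.
  lra.
rewrite (_ : 2^-1 = (q / 2) * q^-1); last by rewrite mulrAC mulfV ?gt_eqF // mul1r.
rewrite powRrM; apply: gt0_ltr_powR.
- by rewrite invr_gt0.
- by rewrite nnegrE powR_ge0.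
- by rewrite nnegrE; have := powR_ge0 `|1 + rho + (1 - rho) * p| q; nra.
- lra.
Qed.
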